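(* Let $k\ge 2$ be an integer such that $T_k(x)=x^k+x+1$ is primitive over $\mathbb{F}_2$, let $M_k$ be the binary cyclic word defined in the context, and let $U$ be the rotation of $M_k$ that starts with $0^k$. Let $U_{\mathrm{lin}}=U\,U[0..k-2]$. Then $$\operatorname{BWT}(U_{\mathrm{lin}}\$)=0^{k-1}\,1\,\$\,(0011)^{2^{k-2}-1}\,010,$$ and this string has exactly $2^{k-1}+4$ runs.
   Context: Define $F:\{0,1\}^k\to\{0,1\}^k$ by $F(x_0,\dots,x_{k-1})=(x_1,\dots,x_{k-1},x_0\oplus x_1)$, and let $F'$ agree with $F$ except $F'(0^k)=0^{k-1}1$ and $F'(10^{k-1})=0^k$. Since $T_k$ is primitive, $F'$ is a single cycle on all $2^k$ states; starting from any state $x_0$ with $x_{t+1}=F'(x_t)$, let $w$ be the cyclic word of length $2^k$ with $w[t]$ the first coordinate of $x_t$ (a binary de Bruijn cycle of order $k$). $M_k$ is obtained from $w$ by reversing it and complementing every bit. Strings are $0$-indexed; a rotation of a cycle $C$ of length $n$ by $c$ is the word $U[i]=C[(i+c)\bmod n]$. $\$$ is an end-marker smaller than $0$ and $1$, appended once. $\operatorname{BWT}(v)$ is the last column of the matrix of the lexicographically sorted cyclic rotations of $v$; a run is a maximal block of one repeated symbol. *)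

(* Defs.v *)
From mathcomp Require Import all_boot all_algebra.
Set Implicit Arguments. Unset Strict Implicit. Unset Printing Implicit Defensive.
Import GRing.Theory.

Local Open Scope ring_scope.
Definition primitive_poly2 (p : {poly 'F_2}) : Prop :=
  let k := (size p).-1 in
  [/\ irreducible_poly p,
      p %| 'X^(2 ^ k - 1)%N - 1
    & forall e : nat, (0 < e)%N -> p %| 'X^e - 1 -> (2 ^ k - 1 <= e)%N].

Definition Tpoly (k : nat) : {poly 'F_2} := 'X^k + 'X + 1.
Local Close Scope ring_scope.

(* states are sequences of booleans of length k; x = (x_0, ..., x_{k-1}) *)
Definition Fshift (x : seq bool) : seq bool :=
  behead x ++ [:: addb (nth false x 0) (nth false x 1)].

Definition Fprime (k : nat) (x : seq bool) : seq bool :=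
  if x == nseq k false then rcons (nseq k.-1 false) true
  else if x == true :: nseq k.-1 false then nseq k false
  else Fshift x.

Definition dB_word (k : nat) (x0 : seq bool) : seq bool :=
  mkseq (fun t => nth false (iter t (Fprime k) x0) 0) (2 ^ k).

Definition Mword (k : nat) (x0 : seq bool) : seq bool :=
  map negb (rev (dB_word k x0)).

Definition rotation (C : seq bool) (c : nat) : seq bool :=
  mkseq (fun i => nth false C ((i + c) %% size C)) (size C).

(* Alphabet encoded in nat: $ = 0, bit 0 = 1, bit 1 = 2 (so $ < 0 < 1). *)
Definition sym (b : bool) : nat := (nat_of_bool b).+1.
Definition dollar : nat := 0.

Fixpoint lexle (s t : seq nat) : bool :=
  match s, t with
  | [::], _ => true
  | _ :: _, [::] => false
  | a :: s', b :: t' => (a < b) || ((a == b) && lexle s' t')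
  end.

Definition BWT (v : seq nat) : seq nat :=
  map (fun r => last dollar r) (sort lexle [seq rot i v | i <- iota 0 (size v)]).

Fixpoint runs (s : seq nat) : nat :=
  match s with
  | [::] => 0
  | [:: _] => 1
  | x :: ((y :: _) as s') => (x != y) + runs s'
  end.

Definition bwt_target (k : nat) : seq nat :=
  nseq k.-1 (sym false) ++ [:: sym true; dollar]
  ++ flatten (nseq (2 ^ (k - 2) - 1) [:: sym false; sym false; sym true; sym true])
  ++ [:: sym false; sym true; sym false].

(* Main.v *)
Require Import Defs.
From mathcomp Require Import all_boot all_algebra.
From mathcomp Require Import ring zify.
Set Implicit Arguments. Unset Strict Implicit. Unset Printing Implicit Defensive.

Module MP1.
Import GRing.Theory.

Lemma size_Fshift x : 0 < size x -> size (Fshift x) = size x.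
Proof. by case: x => //= a s _; rewrite size_cat /= addn1. Qed.

Lemma nth_Fshift x j : 0 < size x ->
  nth false (Fshift x) j =
  if j < (size x).-1 then nth false x j.+1
  else if j == (size x).-1 then addb (nth false x 0) (nth false x 1) else false.
Proof.
case: x => //= a s _; rewrite nth_cat size_behead /=.
case: ltnP => // hj; case: eqP => [->|hne]; first by rewrite subnn.
by rewrite nth_default //= subn_gt0; rewrite ltn_neqAle eq_sym; apply/andP; split => //; apply/eqP.
Qed.

Local Open Scope ring_scope.

Definition phi (k : nat) (x : seq bool) : {poly 'F_2} :=
  \poly_(i < k) ((if i == 0%N then nth false x 0 else nth false x (k - i))%:R).

Lemma F2add (a b : bool) : ((a (+) b)%:R : 'F_2) = a%:R + b%:R.
Proof. by case: a; case: b; apply/eqP. Qed.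

Lemma F2inj (a b : bool) : ((a%:R : 'F_2) = b%:R) -> a = b.
Proof. by case: a; case: b => // /eqP. Qed.

Lemma F2xx (a : 'F_2) : a + a = 0.
Proof. by case: a => [[|[|]]] //= ?; apply/eqP. Qed.

Lemma coefT k i : (1 < k)%N -> (Tpoly k)`_i = ((i == 0%N) || (i == 1%N) || (i == k))%:R.
Proof.
move=> hk; rewrite /Tpoly !coefD coefXn coefX coef1.
case: i => [|[|i]] /=.
- by rewrite eq_sym (gtn_eqF (ltnW hk)) !add0r.
- by rewrite eq_sym (gtn_eqF hk) add0r addr0.
- by rewrite !addr0.
Qed.

End MP1.
Import MP1.

Module MP1b.
Import GRing.Theory.
Local Open Scope ring_scope.
Lemma phiF k x : (1 < k)%N -> size x = k ->
  phi k (Fshift x) = 'X * phi k x + (nth false x 1)%:R%:P * Tpoly k.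
Proof.
move=> hk sx; apply/polyP => i.
have s0 : (0 < size x)%N by rewrite sx ltnW.
rewrite coefD coefXM coefCM coefT // !coef_poly.
case: i => [|[|i]] /=; rewrite nth_Fshift // sx.
- by rewrite (ltnW hk) -subn1 subn_gt0 hk mulr1 add0r.
- rewrite hk (ltnW hk) subn1 ltnn eqxx F2add mulr1 //.
- case: (ltngtP i.+2 k) => [hi|hi|hi].
  + rewrite mulr0 addr0.
    have -> : (k - i.+2 < k.-1)%N by rewrite -subn1 ltn_sub2l // ltnW.
    by rewrite subnSK // ltnW.
  + by rewrite mulr0 addr0.
  + by rewrite mulr1 -hi subSn // subnn F2xx.
Qed.

Lemma size_T k : (1 < k)%N -> size (Tpoly k) = k.+1.
Proof.
move=> hk; rewrite /Tpoly -addrA -polyC1 size_polyDl size_polyXn // size_XaddC //.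
Qed.

Lemma size_phi k x : (size (phi k x) <= k)%N.
Proof. exact: size_poly. Qed.

Lemma phi_inj k a b : size a = k -> size b = k -> phi k a = phi k b -> a = b.
Proof.
move=> sa sb E; apply: (@eq_from_nth _ false) => [|j hj]; first by rewrite sa sb.
rewrite sa in hj.
have := congr1 (fun p : {poly 'F_2} => p`_(if j == 0%N then 0%N else (k - j)%N)) E.
rewrite /= !coef_poly; case: (j =P 0%N) => [->|/eqP jn0].
  have k0 : (0 < k)%N by apply: leq_ltn_trans hj.
  rewrite eqxx k0; exact: F2inj.
have h1 : (k - j < k)%N by rewrite ltn_subrL lt0n jn0 (leq_ltn_trans _ hj).
have h2 : (k - j == 0)%N = false by rewrite subn_eq0 leqNgt hj.
rewrite h1 h2 (subKn (ltnW hj)); exact: F2inj.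
Qed.

Lemma phi_dvd_eq k a b : (1 < k)%N -> size a = k -> size b = k ->
  Tpoly k %| phi k a - phi k b -> a = b.
Proof.
move=> hk sa sb hd; apply: (phi_inj sa sb).
case: (eqVneq (phi k a - phi k b) 0) => [/eqP|nz]; first by rewrite subr_eq0 => /eqP.
have := dvdp_leq nz hd; rewrite size_T //.
have := size_polyD (phi k a) (- phi k b); rewrite size_polyN.
move=> h1 h2; have := leq_trans h2 h1; rewrite leq_max.
have e1 := size_phi k a; have e2 := size_phi k b.
by rewrite ltnNge e1 ltnNge e2.
Qed.

Lemma size_iterF k x t : (0 < k)%N -> size x = k -> size (iter t Fshift x) = k.
Proof.
move=> hk sx; elim: t => //= t IH; rewrite size_Fshift IH //.
Qed.

Lemma phi_iter k x t : (1 < k)%N -> size x = k ->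
  Tpoly k %| 'X^t * phi k x - phi k (iter t Fshift x).
Proof.
move=> hk sx; elim: t => [|t IH] /=; first by rewrite expr0 mul1r subrr dvdp0.
rewrite phiF //; last exact: size_iterF (ltnW hk) sx.
have -> : 'X^(t.+1) * phi k x - ('X * phi k (iter t Fshift x) +
   (nth false (iter t Fshift x) 1)%:R%:P * Tpoly k) =
   'X * ('X^t * phi k x - phi k (iter t Fshift x)) -
   (nth false (iter t Fshift x) 1)%:R%:P * Tpoly k.
  by rewrite exprS mulrBr mulrA opprD addrA.
by apply: dvdp_sub; [exact: dvdp_mull IH | exact: dvdp_mull (dvdpp _)].
Qed.

Definition eseq k := rcons (nseq k.-1 false) true.

Lemma size_eseq k : (0 < k)%N -> size (eseq k) = k.
Proof. by move=> hk; rewrite size_rcons size_nseq prednK. Qed.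

Lemma phi_e k : (1 < k)%N -> phi k (eseq k) = 'X.
Proof.
move=> hk; apply/polyP => i; rewrite coef_poly coefX /eseq.
case: i => [|[|i]] /=.
- by rewrite (ltnW hk) nth_rcons size_nseq nth_nseq -subn1 subn_gt0 hk.
- by rewrite hk nth_rcons size_nseq subn1 ltnn eqxx.
- case: ltnP => // hi; rewrite nth_rcons size_nseq nth_nseq.
  have -> : (k - i.+2 < k.-1)%N by rewrite -subn1 ltn_sub2l // ltnW.
  by [].
Qed.

End MP1b.
Import MP1b.

Module MP2.
Import GRing.Theory.
Local Open Scope ring_scope.

Lemma coprimeTX k : (1 < k)%N -> coprimep (Tpoly k) 'X.
Proof.
move=> hk; have := coprimep_XsubC (Tpoly k) 0; rewrite polyC0 subr0 => ->.
rewrite /root /Tpoly !hornerE expr0n gtn_eqF ?(ltnW hk) // add0r.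
Qed.

Lemma prim_size k : (1 < k)%N -> (size (Tpoly k)).-1 = k.
Proof. by move=> hk; rewrite size_T. Qed.

Lemma orbit_period k : (1 < k)%N -> primitive_poly2 (Tpoly k) ->
  iter (2 ^ k - 1) Fshift (eseq k) = eseq k.
Proof.
move=> hk [_ h2 _]; rewrite prim_size // in h2.
have se := size_eseq (ltnW hk).
apply: (phi_dvd_eq hk (size_iterF _ (ltnW hk) se) se).
have h := phi_iter (2 ^ k - 1) hk se; rewrite phi_e // in h.
rewrite phi_e //.
have h3 : Tpoly k %| ('X^(2 ^ k - 1) - 1) * 'X by rewrite dvdp_mulr.
have -> : phi k (iter (2 ^ k - 1) Fshift (eseq k)) - 'X =
  ('X^(2 ^ k - 1) - 1) * 'X - ('X^(2 ^ k - 1) * 'X - phi k (iter (2 ^ k - 1) Fshift (eseq k))).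
  by ring.
by rewrite dvdp_sub.
Qed.

Lemma orbit_distinct k a d : (1 < k)%N -> primitive_poly2 (Tpoly k) ->
  (0 < d)%N -> (d < 2 ^ k - 1)%N ->
  iter (a + d) Fshift (eseq k) != iter a Fshift (eseq k).
Proof.
move=> hk [_ _ h3] d0 dlt; rewrite prim_size // in h3.
apply/eqP => E.
have se := size_eseq (ltnW hk).
have ha := phi_iter a hk se; have hb := phi_iter (a + d) hk se.
rewrite phi_e // in ha hb; rewrite E in hb.
have : Tpoly k %| ('X^d - 1) * 'X^(a.+1).
  have -> : ('X^d - 1) * 'X^(a.+1) =
     ('X^(a + d) * 'X - phi k (iter a Fshift (eseq k))) -
     ('X^a * 'X - phi k (iter a Fshift (eseq k))).
    by rewrite exprS exprD; ring.
  by rewrite dvdp_sub.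
rewrite Gauss_dvdpl; last by rewrite coprimep_expr // coprimeTX.
by move/(h3 _ d0); rewrite leqNgt dlt.
Qed.

End MP2.
Import MP2.

Module MP3.

Definition os k := true :: nseq k.-1 false.

Lemma pow_ge4 k : 1 < k -> 4 <= 2 ^ k.
Proof. by move=> hk; rewrite (@leq_exp2l 2 2 k isT). Qed.

Lemma Fshift_z k : 1 < k -> Fshift (nseq k false) = nseq k false.
Proof. by case: k => [|[|k]] //= _; rewrite /Fshift /=; congr cons; elim: k => //= k ->. Qed.

Lemma Fshift_o k : 1 < k -> Fshift (os k) = eseq k.
Proof. by case: k => [|[|k]] //= _; rewrite /Fshift /eseq /= cats1. Qed.

Lemma Fshift_inj x y : 1 < size x -> size y = size x -> Fshift x = Fshift y -> x = y.
Proof.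
case: x => [|a [|b s]] //=; case: y => [|a' [|b' s']] //= _ [sz]; rewrite /Fshift /=.
move=> [eb E]; subst b'.
have E1 := congr1 (take (size s)) E; rewrite !take_size_cat // in E1; subst s'.
move/eqP: E; rewrite eqseq_cat // => /andP [_ /eqP [E2]].
by congr (_ :: _ :: _); move: E2; case: a; case: a'; case: b.
Qed.

Lemma eseq_neq_z k : 0 < k -> eseq k != nseq k false.
Proof.
case: k => // k _; rewrite /eseq; apply/eqP => /(congr1 (fun s => nth false s k)).
rewrite -[k.+1.-1]/k nth_rcons size_nseq ltnn eqxx nth_nseq; by case: ifP.
Qed.

Section Orbit.
Variable k : nat.
Hypothesis hk : 1 < k.
Hypothesis hp : primitive_poly2 (Tpoly k).
Local Notation n := (2 ^ k).
Local Notation Fs := Fshift.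
Local Notation e := (eseq k).

Lemma iter_mul q : iter ((n - 1) * q) Fs e = e.
Proof.
elim: q => [|q IH]; first by rewrite muln0.
by rewrite mulnS iterD IH orbit_period.
Qed.

Lemma iter_e_neq_z s : iter s Fs e != nseq k false.
Proof.
apply/eqP => E.
have h4 := pow_ge4 hk.
have hz : forall m, iter (m + s) Fs e = nseq k false.
  by elim=> [|m IH] //=; rewrite IH Fshift_z.
have := iter_mul s.+1; have -> : (n - 1) * s.+1 = ((n - 1) * s.+1 - s) + s.
  by rewrite subnK //; nia.
by rewrite hz => /esym/eqP; rewrite (negbTE (eseq_neq_z (ltnW hk))).
Qed.

Lemma iter_last : iter (n - 2) Fs e = os k.
Proof.
have h4 := pow_ge4 hk.
apply: Fshift_inj.
- by rewrite (size_iterF _ (ltnW hk)) ?size_eseq // ltnW.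
- by rewrite /os /= size_nseq (size_iterF _ (ltnW hk)) ?size_eseq ?prednK // ltnW.
rewrite Fshift_o //.
have := orbit_period hk hp; have -> : n - 1 = (n - 2).+1 by lia.
by [].
Qed.

Lemma iter_neq_o s : s < n - 2 -> iter s Fs e != os k.
Proof.
move=> hs; apply/eqP => E.
have h4 := pow_ge4 hk.
have hs1 : s.+1 < n - 1 by lia.
have := orbit_distinct 0 hk hp (ltn0Sn s) hs1.
by rewrite add0n /= E Fshift_o // eqxx.
Qed.

Definition Y t := iter t (Fprime k) (nseq k false).

Lemma size_Fprime x : size x = k -> size (Fprime k x) = k.
Proof.
move=> sx; rewrite /Fprime; case: eqP => _.
  by rewrite size_rcons size_nseq prednK // ltnW.
case: eqP => _; first by rewrite size_nseq.
by rewrite size_Fshift sx // ltnW.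
Qed.

Lemma size_Y t : size (Y t) = k.
Proof. by elim: t => [|t IH] /=; [rewrite size_nseq | rewrite size_Fprime]. Qed.

Lemma Y_succ t : t <= n - 2 -> Y t.+1 = iter t Fs e.
Proof.
elim: t => [|t IH] ht.
  by rewrite /Y /= /Fprime eqxx.
rewrite /Y iterS -/(Y t.+1) IH ?(ltnW ht) //= /Fprime.
rewrite (negbTE (iter_e_neq_z t)).
have ht' : t < n - 2 by [].
by rewrite (negbTE (iter_neq_o ht')).
Qed.

Lemma Y_n : Y n = nseq k false.
Proof.
have h4 := pow_ge4 hk.
have -> : n = (n - 2).+2 by lia.
rewrite /Y iterS -/(Y (n - 2).+1) Y_succ // iter_last /Fprime.
have -> : (os k == nseq k false) = false.
  by case: k hk => [|kk] //.
by rewrite eqxx.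
Qed.

Lemma Y_inj a b : a < n -> b < n -> Y a = Y b -> a = b.
Proof.
have h4 := pow_ge4 hk.
wlog hab : a b / a <= b.
  move=> H ha hb E; case: (leqP a b) => h; first exact: H.
  by apply/esym/H => //; apply: ltnW.
move=> ha hb E; case: (ltngtP a b) hab => // hlt _.
case: a ha E hlt => [|a] ha E hlt.
  case: b hb E hlt => // b hb; rewrite /Y /= -/(Y b) => E.
  have := iter_e_neq_z b; rewrite -Y_succ; last by lia.
  by rewrite /Y /= -/(Y b) -E eqxx.
case: b hb E hlt => // b hb E hlt.
rewrite !Y_succ in E; try lia.
have h1 : 0 < b - a by lia.
have h2 : b - a < n - 1 by lia.
have := orbit_distinct a hk hp h1 h2.
rewrite subnKC; last by lia.
by rewrite E eqxx.
Qed.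

Lemma Y_cover x : size x = k -> exists2 t, t < n & Y t = x.
Proof.
move=> sx.
pose L := mkseq Y n.
pose A := [seq val t | t : k.-tuple bool].
have uL : uniq L.
  rewrite /L map_inj_in_uniq ?iota_uniq // => a b; rewrite !mem_iota !add0n => ha hb.
  exact: Y_inj.
have sub : {subset L <= A}.
  move=> y /mapP [t _ ->]; apply/mapP; exists (Tuple (introT eqP (size_Y t))) => //.
  by rewrite mem_enum.
have hs : size A <= size L.
  by rewrite /A size_map -cardE card_tuple card_bool /L size_mkseq.
have [_ eqLA] := uniq_min_size uL sub hs.
have : x \in A.
  apply/mapP; exists (Tuple (introT eqP sx)) => //; by rewrite mem_enum.
rewrite -eqLA => /mapP [t]; rewrite mem_iota add0n => ht ->.
by exists t.
Qed.

End Orbit.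

End MP3.
Import MP3.

Module MP4.

Definition gsucc k (x : seq bool) : bool :=
  if x == nseq k false then true else if x == os k then false
  else addb (nth false x 0) (nth false x 1).

Lemma nth_Fprime k x j : 1 < k -> size x = k -> j < k ->
  nth false (Fprime k x) j = if j < k.-1 then nth false x j.+1 else gsucc k x.
Proof.
move=> hk sx hj; rewrite /Fprime /gsucc -/(os k).
case: (x =P nseq k false) => [->|_].
  rewrite nth_rcons size_nseq !nth_nseq; case: ltnP => [_|h]; first by case: ifP.
  have -> : j = k.-1 by lia.
  by rewrite eqxx.
case: (x =P os k) => [->|_].
  rewrite nth_nseq hj /os; case: ltnP => // h.
  by rewrite /= nth_nseq h.
rewrite nth_Fshift ?sx; last by lia.
case: ltnP => // h; have -> : j = k.-1 by lia. by rewrite eqxx.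
Qed.

Lemma mod_small_diff x d n : d < n -> (x + d) %% n = x %% n -> d = 0.
Proof.
move=> hd; rewrite -modnDml => E.
have hx : x %% n < n by apply: ltn_pmod; lia.
case: (ltnP (x %% n + d) n) => h.
  by move: E; rewrite modn_small //; lia.
move: E; have -> : x %% n + d = (x %% n + d - n) + n by lia.
by rewrite modnDr modn_small; lia.
Qed.

Section Words.
Variable k : nat.
Hypothesis hk : 1 < k.
Hypothesis hp : primitive_poly2 (Tpoly k).
Variable x0 : seq bool.
Hypothesis sx0 : size x0 = k.
Local Notation n := (2 ^ k).

Lemma n_ge4 : 4 <= n. Proof. exact: pow_ge4. Qed.
Lemma k_lt_n : k < n. Proof. by apply: ltn_expl. Qed.

Definition Xs t := iter t (Fprime k) x0.

Lemma size_Xs t : size (Xs t) = k.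
Proof. by elim: t => [|t IH] //=; rewrite size_Fprime. Qed.

Lemma Y_per t : Y k (t + n) = Y k t.
Proof. by rewrite /Y iterD -/(Y k n) Y_n. Qed.

Lemma Y_mod t : Y k t = Y k (t %% n).
Proof.
rewrite {1}(divn_eq t n); elim: (t %/ n) => [|q IH]; first by rewrite mul0n add0n.
by rewrite mulSn -addnA addnC Y_per.
Qed.

Lemma Xs_eq_mod s t : Xs s = Xs t -> s %% n = t %% n.
Proof.
have [a ha Ea] := Y_cover hk hp sx0.
have XY u : Xs u = Y k (u + a) by rewrite /Xs -Ea /Y iterD.
rewrite !XY Y_mod [Y k (t + a)]Y_mod => /(Y_inj hk hp) E.
have {E} E : (s + a) %% n = (t + a) %% n by apply: E; apply: ltn_pmod; lia.
by move/eqP: E; rewrite eqn_modDr => /eqP.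
Qed.

Definition W t := nth false (Xs t) 0.

Lemma nth_Xs t j : j < k -> nth false (Xs t) j = W (t + j).
Proof.
elim: j t => [|j IH] t hj; first by rewrite addn0.
have -> : nth false (Xs t) j.+1 = nth false (Xs t.+1) j.
  by rewrite /Xs iterS nth_Fprime // ?size_Xs //; [rewrite ifT //; lia | lia].
by rewrite IH ?addSnnS //; lia.
Qed.

Lemma Xs_win t : Xs t = mkseq (fun j => W (t + j)) k.
Proof.
apply: (@eq_from_nth _ false); first by rewrite size_Xs size_mkseq.
by move=> j; rewrite size_Xs => hj; rewrite nth_mkseq // nth_Xs.
Qed.

Lemma W_rec t : W (t + k) = gsucc k (Xs t).
Proof.
have -> : t + k = t.+1 + k.-1 by lia.
rewrite -nth_Xs; last by lia.
by rewrite /Xs iterS nth_Fprime ?size_Xs // ?ltnn //; lia.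
Qed.

Lemma W_per t : W (t + n) = W t.
Proof.
have [a ha Ea] := Y_cover hk hp sx0.
have XY u : Xs u = Y k (u + a) by rewrite /Xs -Ea /Y iterD.
by rewrite /W !XY addnAC Y_per.
Qed.

Lemma W_perm t m : W (t + m * n) = W t.
Proof. elim: m => [|m IH]; first by rewrite mul0n addn0. by rewrite mulSn addnCA addnC W_per. Qed.

End Words.

End MP4.
Import MP4.

Module MP5.

Definition predw k (v : seq bool) := ~~ gsucc k (rev (map negb v)).

Section UV.
Variable k : nat.
Hypothesis hk : 1 < k.
Hypothesis hp : primitive_poly2 (Tpoly k).
Variable x0 : seq bool.
Hypothesis sx0 : size x0 = k.
Variable c : nat.
Local Notation n := (2 ^ k).
Hypothesis hc : c < n.
Local Notation W := (W k x0).

Definition V i := ~~ W (3 * n - 1 - c - i).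

Lemma size_M : size (Mword k x0) = n.
Proof. by rewrite /Mword size_map size_rev size_mkseq. Qed.

Lemma nth_M i : i < n -> nth false (Mword k x0) i = ~~ W (n - 1 - i).
Proof.
move=> hi; rewrite /Mword (nth_map false) ?size_rev ?size_mkseq //.
rewrite nth_rev ?size_mkseq // nth_mkseq; last by lia.
by rewrite /W /Xs; congr (~~ nth _ (iter _ _ _) _); lia.
Qed.

Local Notation U := (rotation (Mword k x0) c).

Lemma size_U : size U = n.
Proof. by rewrite /rotation size_mkseq size_M. Qed.

Lemma nth_U i : i < n -> nth false U i = V i.
Proof.
move=> hi; have h4 := n_ge4 hk.
rewrite /rotation size_M nth_mkseq // nth_M; last by apply: ltn_pmod; lia.
rewrite /V; congr (~~ _).
case: (ltnP (i + c) n) => h.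
  rewrite modn_small //.
  have -> : 3 * n - 1 - c - i = (n - 1 - (i + c)) + 2 * n by lia.
  by rewrite W_perm.
have -> : i + c = (i + c - n) + n by lia.
rewrite modnDr modn_small; last by lia.
have -> : 3 * n - 1 - c - i = (n - 1 - (i + c - n)) + 1 * n by lia.
by rewrite W_perm.
Qed.

Local Notation Ulin := (U ++ take k.-1 U).

Lemma size_Ulin : size Ulin = n + k.-1.
Proof.
have hkn := k_lt_n k.
by rewrite size_cat size_take size_U; case: ltnP => //; lia.
Qed.

Lemma V_per i : i + n <= 3 * n - 1 - c -> V (i + n) = V i.
Proof.
move=> h; rewrite /V; have -> : 3 * n - 1 - c - i = (3 * n - 1 - c - (i + n)) + 1 * n by lia.
by rewrite W_perm.
Qed.

Lemma nth_Ulin i : i < n + k.-1 -> nth false Ulin i = V i.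
Proof.
move=> hi; have hkn := k_lt_n k.
rewrite nth_cat size_U; case: ltnP => h; first exact: nth_U.
rewrite nth_take; last by lia.
rewrite nth_U; last by lia.
have -> : i = (i - n) + n by lia.
rewrite V_per ?addnK //; lia.
Qed.

Definition vw i := mkseq (fun j => V (i + j)) k.

Lemma take_drop_Ulin i : i < n -> take k (drop i Ulin) = vw i.
Proof.
move=> hi; have hkn := k_lt_n k.
apply: (@eq_from_nth _ false).
  rewrite size_take size_drop size_Ulin size_mkseq; case: ltnP => //; lia.
move=> j; rewrite size_take size_drop size_Ulin => hj.
have hjk : j < k by move: hj; case: ifP => h; lia.
rewrite nth_take // nth_drop nth_Ulin ?nth_mkseq //; lia.
Qed.

Lemma vw_rev i : 0 < i -> i <= n ->
  rev (map negb (vw i)) = Xs k x0 (3 * n - c - i - k).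
Proof.
move=> i0 hi; have hkn := k_lt_n k.
rewrite Xs_win //; apply: (@eq_from_nth _ false).
  by rewrite size_rev size_map !size_mkseq.
move=> j; rewrite size_rev size_map size_mkseq => hj.
rewrite nth_rev; last by rewrite size_map size_mkseq.
rewrite size_map size_mkseq (nth_map false); last by rewrite size_mkseq; lia.
rewrite /vw !nth_mkseq //; last by lia.
rewrite /V negbK; congr (W _); lia.
Qed.

Lemma V_rec i : 0 < i -> i <= n -> V i.-1 = predw k (vw i).
Proof.
move=> i0 hi; have hkn := k_lt_n k.
rewrite /predw vw_rev // -W_rec // /V; congr (~~ W _); lia.
Qed.

Lemma vw_inj i j : i < n -> j < n -> vw i = vw j -> i = j.
Proof.
have hkn := k_lt_n k.
wlog hij : i j / i <= j.
  move=> H hi hj E; case: (leqP i j) => h; first exact: H.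
  by apply/esym/H => //; apply: ltnW.
move=> hi hj E.
case: (posnP i) => [i0|i0].
  case: (posnP j) => [j0|j0]; first by rewrite i0 j0.
  subst i.
  have E' : vw n = vw j.
    rewrite -E /vw /mkseq; apply/eq_in_map => t; rewrite mem_iota add0n => /andP [_ ht]; rewrite add0n.
    rewrite addnC V_per //; lia.
  have := congr1 (fun v => rev (map negb v)) E'; rewrite /= !vw_rev //; try lia.
  move/(Xs_eq_mod hk hp sx0).
  have -> : 3 * n - c - j - k = (3 * n - c - n - k) + (n - j) by lia.
  have hd : n - j < n by lia.
  move=> /esym /(mod_small_diff hd); lia.
have := congr1 (fun v => rev (map negb v)) E; rewrite /= !vw_rev //; try lia.
move/(Xs_eq_mod hk hp sx0).
have -> : 3 * n - c - i - k = (3 * n - c - j - k) + (j - i) by lia.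
have hd : j - i < n by lia.
move=> /(mod_small_diff hd); lia.
Qed.

Hypothesis hU0 : take k U = nseq k false.

Lemma V_small j : j < k -> V j = false.
Proof.
move=> hj; have hkn := k_lt_n k.
rewrite -nth_U; last by lia.
by rewrite -(nth_take false hj) hU0 nth_nseq hj.
Qed.

Lemma vw0 : vw 0 = nseq k false.
Proof.
apply: (@eq_from_nth _ false); first by rewrite size_mkseq size_nseq.
by move=> j; rewrite size_mkseq => hj; rewrite nth_mkseq // nth_nseq hj add0n V_small.
Qed.

Lemma V_last : V n.-1 = true.
Proof.
have hkn := k_lt_n k.
rewrite V_rec //; last by lia.
have -> : vw n = nseq k false.
  rewrite -vw0 /vw /mkseq; apply/eq_in_map => t; rewrite mem_iota add0n => /andP [_ ht]; rewrite add0n addnC V_per //; lia.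
rewrite /predw map_nseq rev_nseq /gsucc /os.
case: k hk => [|[|kk]] // _ /=.
Qed.

End UV.

End MP5.
Import MP5.

Module MP6.

Lemma lexle_refl : reflexive lexle.
Proof. by elim=> //= a s ->; rewrite eqxx orbT. Qed.

Lemma lexle_trans : transitive lexle.
Proof.
move=> t s u; elim: s t u => [|a s IH] [|b t] [|c u] //=.
case/orP => [hba|/andP [/eqP <- hts]]; case/orP => [hac|/andP [/eqP <- hsu]].
- by rewrite (ltn_trans hba hac).
- by rewrite hba.
- by rewrite hac.
- by rewrite eqxx (IH _ _ hts hsu) orbT.
Qed.

Lemma lexle_anti : antisymmetric lexle.
Proof.
elim=> [|a s IH] [|b t] //=.
case/andP => /orP [h1|/andP [/eqP e1 h1]] /orP [h2|/andP [/eqP e2 h2]].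
- by move: (ltn_trans h1 h2); rewrite ltnn.
- by move: h1; rewrite e2 ltnn.
- by move: h2; rewrite e1 ltnn.
- by rewrite e1 (IH t) // h1 h2.
Qed.

Lemma lexle_total : total lexle.
Proof.
elim=> [|a s IH] [|b t] //=.
case: (ltngtP a b) => //= ->; rewrite eqxx /=; exact: IH.
Qed.

Lemma sort_key (T : eqType) (le : rel T) (N : nat) (r : nat -> T) (key : nat -> nat) (d : T) :
  transitive le -> antisymmetric le -> total le ->
  (forall i, i < N -> key i < N) ->
  (forall i j, i < N -> j < N -> key i = key j -> i = j) ->
  (forall i j, i < N -> j < N -> key i <= key j -> le (r i) (r j)) ->
  forall j, j < N -> exists2 i, i < N & key i = j /\
    nth d (sort le (map r (iota 0 N))) j = r i.
Proof.
move=> tr an to kN kinj kmon.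
pose kle := relpre key leq.
pose idx := sort kle (iota 0 N).
have kto : total kle by move=> x y; exact: leq_total.
have pidx : perm_eq idx (iota 0 N) by rewrite perm_sort.
have sidx : sorted kle idx by apply: sort_sorted.
have memidx x : (x \in idx) = (x < N) by rewrite (perm_mem pidx) mem_iota.
have ukey : uniq (map key (iota 0 N)).
  rewrite map_inj_in_uniq ?iota_uniq // => x y; rewrite !mem_iota !add0n => hx hy.
  exact: kinj.
have pkey : perm_eq (map key (iota 0 N)) (iota 0 N).
  apply: uniq_perm => //; first exact: iota_uniq.
  have sub : {subset map key (iota 0 N) <= iota 0 N}.
    by move=> y /mapP [x]; rewrite !mem_iota !add0n => hx ->; rewrite kN.
  have hsz : size (iota 0 N) <= size (map key (iota 0 N)) by rewrite size_map.
  by have [_ E] := uniq_min_size ukey sub hsz.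
have keyidx : map key idx = iota 0 N.
  apply: (sorted_eq leq_trans anti_leq).
  - by rewrite sorted_map.
  - exact: iota_sorted.
  - by apply: perm_trans pkey; apply: perm_map.
have sr : sorted le (map r idx).
  rewrite sorted_map; apply: (sub_in_sorted (P := fun x => x < N)) sidx.
    by move=> x y hx hy; apply: kmon.
  by apply/allP => x; rewrite memidx.
have -> : sort le (map r (iota 0 N)) = map r idx.
  apply: (sorted_eq tr an) => //; first exact: sort_sorted.
  by rewrite perm_sort perm_sym; apply: perm_map.
move=> j hj.
have sidxN : size idx = N by rewrite (perm_size pidx) size_iota.
exists (nth 0 idx j).
  by rewrite -memidx mem_nth // sidxN.
split; last by rewrite (nth_map 0) // sidxN.
by rewrite -(nth_map 0 0) ?sidxN // keyidx nth_iota.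
Qed.

End MP6.
Import MP6.

Module MP7.

Fixpoint bval (s : seq bool) : nat :=
  if s is b :: s' then b * 2 ^ size s' + bval s' else 0.

Lemma bval_lt s : bval s < 2 ^ size s.
Proof.
elim: s => [|b s IH] //=; rewrite expnS.
case: b; rewrite /= ?mul1n ?mul0n ?add0n; lia.
Qed.

Lemma bval_inj s t : size s = size t -> bval s = bval t -> s = t.
Proof.
elim: s t => [|a s IH] [|b t] //= [sz].
have h1 := bval_lt s; have h2 := bval_lt t; rewrite sz in h1.
rewrite sz; case: a; case: b; rewrite /= ?mul1n ?mul0n ?add0n => E; try lia.
- by rewrite (IH t) //; lia.
- by rewrite (IH t).
Qed.

Lemma bval_lex s t a b : size s = size t -> bval s < bval t ->
  lexle (map sym s ++ a) (map sym t ++ b).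
Proof.
elim: s t => [|x s IH] [|y t] //= [sz].
have h1 := bval_lt s; have h2 := bval_lt t; rewrite sz in h1.
rewrite sz; case: x; case: y => //= E; try lia; apply: IH => //; lia.
Qed.

Lemma bval_cat s t : bval (s ++ t) = bval s * 2 ^ size t + bval t.
Proof.
elim: s => [|b s IH] //=; rewrite IH size_cat expnD; lia.
Qed.

Lemma bval_nseq_true j : bval (nseq j true) = 2 ^ j - 1.
Proof.
elim: j => //= j IH; rewrite size_nseq IH expnS mul1n.
have := expn_gt0 2 j; lia.
Qed.

Lemma bval_nseq_false j : bval (nseq j false) = 0.
Proof. by elim: j. Qed.

Lemma lex_zeros a b s t : a < b ->
  lexle (nseq a (sym false) ++ dollar :: s) (nseq b (sym false) ++ dollar :: t).
Proof.
elim: a b => [|a IH] [|b] //= hab.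
exact: IH.
Qed.

Lemma lex_zeros_word a w s t : a < size w ->
  lexle (nseq a (sym false) ++ dollar :: s) (map sym w ++ t).
Proof.
elim: a w => [|a IH] [|x w] //= ha.
by case: x => //=; rewrite IH.
Qed.

End MP7.
Import MP7.

Module MP8.

Definition Lb := [:: sym false; sym false; sym true; sym true].
Definition Rb := [:: sym false; sym true; sym false].
Definition Tl m := flatten (nseq m Lb) ++ Rb.

Lemma nthTl m q s : s < 4 -> q <= m ->
  nth 0 (Tl m) (4 * q + s) = if q < m then nth 0 Lb s else nth 0 Rb s.
Proof.
move=> hs; elim: m q => [|m IH] [|q] hq.
- by rewrite muln0 add0n.
- by [].
- rewrite muln0 add0n /Tl.
  have -> : flatten (nseq m.+1 Lb) = Lb ++ flatten (nseq m Lb) by [].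
  by rewrite -catA nth_cat hs.
- rewrite /Tl.
  have -> : flatten (nseq m.+1 Lb) = Lb ++ flatten (nseq m Lb) by [].
  rewrite -catA nth_cat.
  have -> : (4 * q.+1 + s < size Lb) = false by rewrite /=; lia.
  have -> : 4 * q.+1 + s - size Lb = 4 * q + s by rewrite /=; lia.
  by rewrite -/(Tl m) IH.
Qed.

Lemma negb_rev_inj a b : rev (map negb a) = rev (map negb b) -> a = b.
Proof.
move/(congr1 rev); rewrite !revK => /(congr1 (map negb)).
by rewrite -!map_comp !(@eq_map _ _ (negb \o negb) id) ?map_id // => x /=; rewrite negbK.
Qed.

Lemma pred_val k w : 1 < k -> size w = k -> 0 < bval w ->
  sym (predw k w) = nth 0 (Tl (2 ^ (k - 2) - 1)) (bval w).-1.
Proof.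
move=> hk sw hpos.
set m := 2 ^ (k - 2) - 1.
have hd : size (drop (k - 2) w) = 2 by rewrite size_drop sw; lia.
have Ew := cat_take_drop (k - 2) w.
move: Ew hd hpos; case: (drop (k - 2) w) => [|b1 [|b2 [|? ?]]] //= Ew _.
set a := take (k - 2) w.
have sa : size a = k - 2 by rewrite size_take sw; case: ifP => //; lia.
rewrite -Ew bval_cat /=; clear Ew.
set A := bval a.
have hA : A <= m.
  have := bval_lt a; rewrite sa /m; have := expn_gt0 2 (k - 2); lia.
set ra := rev (map negb a).
have hra : (ra == nseq (k - 2) false) = (A == m).
  apply/eqP/eqP => [E|E].
    have : a = nseq (k - 2) true.
      apply: negb_rev_inj; rewrite -/ra E map_nseq rev_nseq //.
    by move=> ea; rewrite /A ea bval_nseq_true.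
  have : a = nseq (k - 2) true.
    apply: bval_inj; first by rewrite sa size_nseq.
    by rewrite bval_nseq_true -/A E.
  by move=> ea; rewrite /ra ea map_nseq rev_nseq.
rewrite /predw map_cat rev_cat /= -/ra /gsucc /os.
have -> : nseq k false = [:: false, false & nseq (k - 2) false].
  by rewrite {1}(_ : k = (k - 2).+2) //; lia.
have -> : k.-1 = (k - 2).+1 by lia.
rewrite /= !eqseq_cons hra.
case: b1; case: b2 => /= hpos.
- rewrite (_ : (_).-1 = 4 * A + 2); last by lia.
  rewrite nthTl //; case: (A =P m) => [->|hAm]; first by rewrite ltnn.
  by have -> : A < m by lia.
- rewrite (_ : (_).-1 = 4 * A + 1); last by lia.
  rewrite nthTl //; case: (A =P m) => [->|hAm]; first by rewrite ltnn.
  by have -> : A < m by lia.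
- rewrite (_ : (_).-1 = 4 * A + 0); last by lia.
  by rewrite nthTl //; case: ifP.
- rewrite (_ : (_).-1 = 4 * A.-1 + 3); last by lia.
  rewrite nthTl //; last by lia.
  by have -> : A.-1 < m by lia.
Qed.

End MP8.
Import MP8.

Module MP9.

Lemma last_rot (s : seq nat) i d : 0 < i <= size s -> last d (rot i s) = nth d s i.-1.
Proof.
case/andP => i0 hi; rewrite /rot last_cat.
case: i i0 hi => // i _ hi; rewrite (take_nth d) // last_rcons //.
Qed.

Section BWTsec.
Variable k : nat.
Hypothesis hk : 1 < k.
Local Notation n := (2 ^ k).
Variable Ul : seq bool.
Hypothesis sUl : size Ul = n + k.-1.
Local Notation win i := (take k (drop i Ul)).
Hypothesis w_inj : forall i j, i < n -> j < n -> win i = win j -> i = j.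
Hypothesis w0 : win 0 = nseq k false.
Hypothesis hrec : forall i, 0 < i -> i < n -> nth false Ul i.-1 = predw k (win i).
Hypothesis hlast : nth false Ul n.-1 = true.
Hypothesis htail : forall i, n <= i -> i < n + k.-1 -> nth false Ul i = false.

Local Notation v := (map sym Ul ++ [:: dollar]).
Local Notation N := (n + k).

Lemma hkn : k < n. Proof. exact: ltn_expl. Qed.

Lemma size_v : size v = N.
Proof. by rewrite size_cat size_map sUl /=; lia. Qed.

Lemma size_win i : i < n -> size (win i) = k.
Proof.
move=> hi; have := hkn; rewrite size_take size_drop sUl; case: ifP => //; lia.
Qed.

Definition key i := if i < n then k + bval (win i) else N.-1 - i.

Lemma rot_lo i : i < n -> exists t, rot i v = map sym (win i) ++ t.
Proof.
move=> hi; rewrite /rot drop_cat size_map sUl.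
have -> : i < n + k.-1 by lia.
eexists; rewrite -map_drop -{1}(cat_take_drop k (drop i Ul)) map_cat -!catA.
reflexivity.
Qed.

Lemma rot_hi i : n <= i -> i < N -> exists t, rot i v = nseq (N.-1 - i) (sym false) ++ dollar :: t.
Proof.
move=> h1 h2; rewrite /rot.
have -> : drop i v = nseq (N.-1 - i) (sym false) ++ [:: dollar].
  rewrite drop_cat size_map sUl; case: ltnP => h3.
    congr (_ ++ _); rewrite -map_drop -map_nseq; congr (map _ _).
    apply: (@eq_from_nth _ false); first by rewrite size_drop size_nseq sUl; lia.
    move=> j; rewrite size_drop sUl => hj; rewrite nth_drop nth_nseq.
    have -> : j < N.-1 - i by lia.
    by apply: htail; lia.
  have -> : i - (n + k.-1) = 0 by lia.
  have -> : N.-1 - i = 0 by lia.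
  by [].
by rewrite -catA /=; eexists.
Qed.

Lemma key_lt i : i < N -> key i < N.
Proof.
rewrite /key; case: ifP => hi h; last by lia.
have := bval_lt (win i); rewrite size_win //; lia.
Qed.

Lemma bval_win0 i : i < n -> bval (win i) = 0 -> i = 0.
Proof.
move=> hi h; apply: w_inj => //; first by lia.
apply: bval_inj; first by rewrite !size_win //; lia.
by rewrite h w0 bval_nseq_false.
Qed.

Lemma key_inj i j : i < N -> j < N -> key i = key j -> i = j.
Proof.
rewrite /key => hi hj; case: ifP => hin; case: ifP => hjn; try lia.
move=> E; apply: w_inj => //; apply: bval_inj; first by rewrite !size_win.
lia.
Qed.

Lemma key_mon i j : i < N -> j < N -> key i <= key j -> lexle (rot i v) (rot j v).
Proof.
move=> hi hj hle.
case: (key i =P key j) => [E|ne].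
  by rewrite (key_inj hi hj E) lexle_refl.
have hlt : key i < key j by lia.
move: hlt; rewrite /key; case: ifP => hin; case: ifP => hjn => hlt.
- have [t1 ->] := rot_lo hin; have [t2 ->] := rot_lo hjn.
  apply: bval_lex; first by rewrite !size_win.
  lia.
- lia.
- have hni : n <= i by lia.
  have [t1 ->] := rot_hi hni hi.
  have [t2 ->] := rot_lo hjn.
  apply: lex_zeros_word; rewrite size_win //; lia.
- have hni : n <= i by lia.
  have hnj : n <= j by lia.
  have [t1 ->] := rot_hi hni hi.
  have [t2 ->] := rot_hi hnj hj.
  apply: lex_zeros; lia.
Qed.

Lemma size_flat m : size (flatten (nseq m Lb)) = 4 * m.
Proof.
elim: m => // m IH.
have -> : flatten (nseq m.+1 Lb) = Lb ++ flatten (nseq m Lb) by [].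
by rewrite size_cat IH /=; lia.
Qed.

Lemma target_eq : bwt_target k =
  nseq k.-1 (sym false) ++ [:: sym true; dollar] ++ Tl (2 ^ (k - 2) - 1).
Proof. by []. Qed.

Lemma size_target : size (bwt_target k) = N.
Proof.
rewrite target_eq size_cat size_nseq /= /Tl size_cat size_flat /=.
have -> : 2 ^ k = 4 * 2 ^ (k - 2).
  by rewrite (_ : 4 = 2 ^ 2) // -expnD subnKC.
have := expn_gt0 2 (k - 2); lia.
Qed.

Lemma nth_target j : nth 0 (bwt_target k) j =
  if j < k.-1 then sym false else if j == k.-1 then sym true
  else if j == k then dollar else nth 0 (Tl (2 ^ (k - 2) - 1)) (j - k.+1).
Proof.
rewrite target_eq nth_cat size_nseq nth_nseq; case: ltnP => // h1.
case: (j =P k.-1) => [->|h2]; first by rewrite subnn.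
case: (j =P k) => [->|h3].
  by have -> : k - k.-1 = 1 by lia.
rewrite nth_cat /=; have -> : j - k.-1 < 2 = false by lia.
congr nth; lia.
Qed.

Lemma bwt_main : BWT v = bwt_target k.
Proof.
apply: (@eq_from_nth _ 0).
  by rewrite /BWT size_map size_sort size_map size_iota size_v size_target.
move=> j; rewrite /BWT size_map size_sort size_map size_iota size_v => hj.
rewrite (nth_map [::]); last by rewrite size_sort size_map size_iota.
have [i hi [ki ->]] := sort_key [::] lexle_trans lexle_anti lexle_total key_lt key_inj key_mon hj.
rewrite -ki nth_target /key.
case: (ltnP i n) => hin.
  case: (posnP i) => [i0|i0].
    subst i; rewrite w0 bval_nseq_false addn0 rot0 last_cat /=.
    have -> : k < k.-1 = false by lia.
    have -> : k == k.-1 = false by lia.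
    by rewrite eqxx.
  rewrite last_rot; last by rewrite size_v; lia.
  rewrite nth_cat size_map; have -> : i.-1 < size Ul by lia.
  rewrite (nth_map false); last by lia.
  rewrite hrec //.
  have hb : 0 < bval (win i).
    by rewrite lt0n; apply/eqP => /(bval_win0 hin); lia.
  have -> : k + bval (win i) < k.-1 = false by lia.
  have -> : k + bval (win i) == k.-1 = false by lia.
  have -> : k + bval (win i) == k = false by lia.
  rewrite pred_val ?size_win //; congr nth; lia.

rewrite last_rot; last by rewrite size_v; lia.
rewrite nth_cat size_map; have -> : i.-1 < size Ul by lia.
rewrite (nth_map false); last by lia.
case: (i =P n) => [ei|ni].
  subst i; rewrite hlast.
  have -> : N.-1 - n < k.-1 = false by lia.
  by have -> : N.-1 - n == k.-1 by lia.
rewrite htail; try lia.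
by have -> : N.-1 - i < k.-1 by lia.
Qed.

End BWTsec.

End MP9.
Import MP9.

Module MP10.

Lemma runs_Tl m : runs (Tl m) = 2 * m + 3 /\ head 0 (Tl m) = sym false.
Proof.
elim: m => [|m [IH hh]] //.
have -> : Tl m.+1 = [:: sym false, sym false, sym true, sym true & Tl m] by [].
split => //.
case E: (Tl m) hh IH => [|x s] //= -> ->; rewrite /sym /=; lia.
Qed.

Lemma runs_nseq j s : runs (nseq j.+1 (sym false) ++ sym true :: s) = 1 + runs (sym true :: s).
Proof. by elim: j => //= j ->. Qed.

Lemma runs_target k : 1 < k -> runs (bwt_target k) = 2 ^ k.-1 + 4.
Proof.
move=> hk; rewrite target_eq.
have -> : k.-1 = (k - 2).+1 by lia.
rewrite runs_nseq.
have [r h] := runs_Tl (2 ^ (k - 2) - 1).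
case E: (Tl _) h r => [|x s] //= -> hr.
rewrite hr expnS /dollar /sym /=.
have := expn_gt0 2 (k - 2); lia.
Qed.


End MP10.
Import MP10.

Unset Implicit Arguments.
Theorem lemma3 (k : nat) (x0 : seq bool) (c : nat) :
  2 <= k ->
  primitive_poly2 (Tpoly k) ->
  size x0 = k ->
  c < 2 ^ k ->
  take k (rotation (Mword k x0) c) = nseq k false ->
  let U := rotation (Mword k x0) c in
  let Ulin := U ++ take k.-1 U in
  BWT (map sym Ulin ++ [:: dollar]) = bwt_target k /\
  runs (BWT (map sym Ulin ++ [:: dollar])) = 2 ^ k.-1 + 4.
Proof.
move=> hk hp sx0 hc hU0; cbv zeta.
have hkn := k_lt_n k.
have E : BWT (map sym (rotation (Mword k x0) c ++ take k.-1 (rotation (Mword k x0) c)) ++ [:: dollar]) = bwt_target k.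
  have nU := nth_Ulin hk hp sx0 hc.
  have tU := take_drop_Ulin hk hp sx0 hc.
  apply: bwt_main => //.
  - exact: size_Ulin.
  - move=> i j hi hj; rewrite !tU //; exact: (vw_inj hk hp sx0 hc hi hj).
  - rewrite tU ?(vw0 hk hp sx0 hc hU0) //; lia.
  - move=> i i0 hi; rewrite nU; last by lia.
    rewrite tU // (V_rec hk sx0 hc) //; lia.
  - rewrite nU; last by lia.
    have := V_last hk hp sx0 hc hU0. done.
  - move=> i h1 h2; rewrite nU //.
    have -> : i = (i - 2 ^ k) + 2 ^ k by lia.
    rewrite (V_per hk hp sx0 hc); last by lia.
    apply: (V_small hk hp sx0 hc hU0); lia.
by split => //; rewrite E runs_target.
Qed.
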